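(* Let $T:[0,1]\to[0,1]$ be the tent map, $T(x)=2x$ for $x<1/2$ and $T(x)=2(1-x)$ for $x\ge1/2$, and let $\Lambda=\{\tau\in[0,1]: T^m(\tau)\le\tau\ \text{for all } m\ge0\}$. Let $K_1=\overline{1}$ and, for $j\ge1$, let $K_{j+1}$ be the periodic sequence whose repeating block is obtained by writing the repeating block of $K_j$ twice and replacing the last symbol by its complement. For $s=s_1s_2\dots\in\{0,1\}^{\mathbb N}$ let $\tau(s)=\sum_{k\ge1}t_k2^{-k}$ with $t_k=\sum_{i=1}^k s_i\pmod 2$, and put $\tau_j=\tau(K_j)$. Then $\tau_j\in\Lambda$ for all $j\ge1$ and $\tau_1<\tau_2<\tau_3<\cdots$. *)

(* Defs.v *)
From Stdlib Require Import Reals Lra List.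
From Coquelicot Require Import Coquelicot.
Open Scope R_scope.

Definition tent (x : R) : R :=
  if Rlt_dec x (1/2) then 2 * x else 2 * (1 - x).

Definition inLambda (tau : R) : Prop :=
  0 <= tau <= 1 /\ forall m : nat, Nat.iter m tent tau <= tau.

(* Repeating block of K_{j+1} (so blk 0 is the block of K_1 = overline{1}).
   blk (j+1) = blk j ++ blk j with its last symbol complemented. *)
Fixpoint blk (j : nat) : list bool :=
  match j with
  | O => true :: nil
  | S j' => let d := blk j' ++ blk j' in
            removelast d ++ (negb (last d false) :: nil)
  end.

(* Sequences s = s_1 s_2 ... are encoded 0-indexed: s k = s_{k+1}. *)
Definition K (j : nat) : nat -> bool :=
  fun k => let b := blk (j - 1) in nth (k mod length b) b false.

Fixpoint tpar (s : nat -> bool) (k : nat) : bool :=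
  match k with
  | O => false
  | S k' => xorb (tpar s k') (s k')
  end.

Definition b2R (b : bool) : R := if b then 1 else 0.

Definition tau_of (s : nat -> bool) : R :=
  Series (fun n : nat => b2R (tpar s (S n)) / 2 ^ (S n)).

Definition tau_j (j : nat) : R := tau_of (K j).

(* Main.v *)
Require Import Defs.
From Stdlib Require Import Reals Lra Lia NArith List.
From Coquelicot Require Import Coquelicot.
Open Scope nat_scope.

Fixpoint tmp (p : positive) : bool :=
  match p with xH => true | xO q => tmp q | xI q => negb (tmp q) end.
Definition TM (n : nat) : bool :=
  match N.of_nat n with N0 => false | Npos p => tmp p end.

Lemma TM0 : TM 0 = false. Proof. reflexivity. Qed.
Lemma TM_even x : TM (2 * x) = TM x.
Proof. unfold TM. rewrite Nat2N.inj_double. destruct (N.of_nat x); reflexivity. Qed.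
Lemma TM_odd x : TM (2 * x + 1) = negb (TM x).
Proof. unfold TM. rewrite Nat.add_1_r, Nat2N.inj_succ_double. destruct (N.of_nat x); reflexivity. Qed.
Lemma TM1 : TM 1 = true. Proof. reflexivity. Qed.

Lemma TM_pow n : TM (2 ^ n) = true.
Proof. induction n. reflexivity. change (2 ^ S n)%nat with (2 * 2 ^ n)%nat. rewrite TM_even; auto. Qed.

Lemma p2pos n : (0 < 2 ^ n)%nat.
Proof. induction n; simpl; lia. Qed.

Lemma TM_add_pow n x : (x < 2 ^ n)%nat -> TM (2 ^ n + x) = negb (TM x).
Proof.
  revert x; induction n; intros x Hx.
  - simpl in Hx. assert (x = 0%nat) by lia. subst. reflexivity.
  - change (2 ^ S n)%nat with (2 * 2 ^ n)%nat in *.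
    destruct (Nat.Even_or_Odd x) as [[y ->]|[y ->]].
    + replace (2 * 2 ^ n + 2 * y)%nat with (2 * (2 ^ n + y))%nat by lia.
      rewrite !TM_even. apply IHn. lia.
    + replace (2 * 2 ^ n + (2 * y + 1))%nat with (2 * (2 ^ n + y) + 1)%nat by lia.
      rewrite !TM_odd, IHn by lia. reflexivity.
Qed.

Lemma last_nth_l (l : list bool) d : last l d = nth (length l - 1) l d.
Proof.
  induction l as [|a l IH]; [reflexivity|].
  destruct l as [|b l]; [reflexivity|].
  change (last (a :: b :: l) d) with (last (b :: l) d). rewrite IH.
  simpl. rewrite Nat.sub_0_r. reflexivity.
Qed.

Lemma blk_len n : length (blk n) = (2 ^ n)%nat.
Proof.
  induction n; [reflexivity|]. simpl blk.
  set (d := blk n ++ blk n).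
  assert (H0 : (length d = 2 * 2 ^ n)%nat) by (unfold d; rewrite length_app; lia).
  assert (Hd : d <> nil). { intro E. rewrite E in H0. simpl in H0. pose proof (p2pos n); lia. }
  pose proof (app_removelast_last false Hd) as H.
  rewrite H in H0. rewrite length_app in *. simpl in *. lia.
Qed.

Lemma blk_nth n i : (i < 2 ^ n)%nat -> nth i (blk n) false = xorb (TM i) (TM (S i)).
Proof.
  revert i; induction n; intros i Hi.
  - simpl in Hi. assert (i = 0%nat) by lia. subst. reflexivity.
  - simpl blk. set (d := blk n ++ blk n).
    pose proof (blk_len n) as Hl.
    assert (Hld : (length d = 2 * 2 ^ n)%nat) by (unfold d; rewrite length_app; lia).
    assert (Hd : d <> nil). { intro E. rewrite E in Hld. simpl in Hld. pose proof (p2pos n); lia. }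
    pose proof (app_removelast_last false Hd) as H.
    assert (Hlr : (length (removelast d) = 2 * 2 ^ n - 1)%nat).
    { rewrite H in Hld. rewrite length_app in Hld. simpl in Hld. lia. }
    change (2 ^ S n)%nat with (2 * 2 ^ n)%nat in Hi.
    destruct (Nat.lt_ge_cases i (2 * 2 ^ n - 1)) as [Hlt|Hge].
    + rewrite app_nth1 by lia.
      assert (E : nth i d false = nth i (removelast d) false).
      { rewrite H at 1. apply app_nth1. lia. }
      rewrite <- E. unfold d.
      destruct (Nat.lt_ge_cases i (2 ^ n)) as [H1|H1].
      * rewrite app_nth1 by lia. apply IHn; auto.
      * assert (exists k, i = (2 ^ n + k)%nat) as [k ->] by (exists (i - 2 ^ n)%nat; lia).
        rewrite app_nth2 by lia. rewrite Hl.
        replace (2 ^ n + k - 2 ^ n)%nat with k by lia. rewrite IHn by lia.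
        replace (S (2 ^ n + k)) with (2 ^ n + S k)%nat by lia.
        rewrite !TM_add_pow by lia. destruct (TM _), (TM _); reflexivity.
    + assert (i = 2 * 2 ^ n - 1)%nat by lia. subst i.
      rewrite app_nth2 by lia. rewrite Hlr, Nat.sub_diag. simpl nth.
      rewrite last_nth_l, Hld. unfold d. rewrite app_nth2 by lia. rewrite Hl.
      rewrite IHn by lia.
      replace (2 * 2 ^ n - 1 - 2 ^ n)%nat with (2 ^ n - 1)%nat by lia.
      replace (S (2 ^ n - 1)) with (2 ^ n)%nat by (pose proof (p2pos n); lia).
      replace (S (2 * 2 ^ n - 1)) with (2 ^ S n)%nat by (simpl; pose proof (p2pos n); lia).
      replace (2 * 2 ^ n - 1)%nat with (2 ^ n + (2 ^ n - 1))%nat by (pose proof (p2pos n); lia).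
      rewrite TM_add_pow by (pose proof (p2pos n); lia).
      rewrite !TM_pow. destruct (TM _); reflexivity.
Qed.

Lemma KT n k : tpar (K (S n)) k = TM (k mod 2 ^ S n).
Proof.
  assert (HL := p2pos n).
  change (2 ^ S n)%nat with (2 * 2 ^ n)%nat.
  assert (TA : forall x, x < 2 ^ n -> TM (2 ^ n + x) = negb (TM x)) by (intros; apply TM_add_pow; auto).
  assert (TP := TM_pow n).
  set (L := (2 ^ n)%nat) in *.
  induction k.
  - rewrite Nat.Div0.mod_0_l. reflexivity.
  - simpl tpar. rewrite IHk. unfold K. replace (S n - 1)%nat with n by lia.
    rewrite blk_len. fold L.
    assert (Hdm := Nat.div_mod k (2 * L) ltac:(lia)).
    assert (Hr := Nat.mod_upper_bound k (2 * L) ltac:(lia)).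
    set (r := (k mod (2 * L))%nat) in *. set (q := (k / (2 * L))%nat) in *.
    destruct (Nat.lt_ge_cases r L) as [H1|H1].
    + assert (E1 : (k mod L = r)%nat).
      { symmetry. apply (Nat.mod_unique _ _ (2 * q)); lia. }
      assert (E2 : (S k mod (2 * L) = S r)%nat).
      { symmetry. apply (Nat.mod_unique _ _ q); lia. }
      rewrite E1, E2, blk_nth by lia. destruct (TM r), (TM (S r)); reflexivity.
    + assert (E1 : (k mod L = r - L)%nat).
      { symmetry. apply (Nat.mod_unique _ _ (2 * q + 1)); lia. }
      rewrite E1, blk_nth by lia.
      assert (exists r', r = (L + r')%nat) as [r' Er] by (exists (r - L)%nat; lia).
      rewrite Er. replace (L + r' - L)%nat with r' by lia.
      rewrite TA by lia.
      destruct (Nat.lt_ge_cases (S r) (2 * L)) as [H2|H2].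
      * assert (E2 : (S k mod (2 * L) = S r)%nat).
        { symmetry. apply (Nat.mod_unique _ _ q); lia. }
        rewrite E2, Er. replace (S (L + r')) with (L + S r')%nat by lia.
        rewrite TA by lia. destruct (TM r'), (TM (S r')); reflexivity.
      * assert (E2 : (S k mod (2 * L) = 0)%nat).
        { symmetry. apply (Nat.mod_unique _ _ (S q)); lia. }
        rewrite E2. replace (S r') with L by lia. rewrite TP.
        destruct (TM r'); reflexivity.
Qed.

Definition E (j a k : nat) : bool :=
  xorb (TM ((k + a) mod 2 ^ j)) (TM (a mod 2 ^ j)).

Lemma M1 P y : (0 < P)%nat -> ((2 * y) mod (2 * P) = 2 * (y mod P))%nat.
Proof.
  intro HP. symmetry. apply (Nat.mod_unique _ _ (y / P)).
  - pose proof (Nat.mod_upper_bound y P ltac:(lia)); lia.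
  - pose proof (Nat.div_mod y P ltac:(lia)); lia.
Qed.
Lemma M2 P y : (0 < P)%nat -> ((2 * y + 1) mod (2 * P) = 2 * (y mod P) + 1)%nat.
Proof.
  intro HP. symmetry. apply (Nat.mod_unique _ _ (y / P)).
  - pose proof (Nat.mod_upper_bound y P ltac:(lia)); lia.
  - pose proof (Nat.div_mod y P ltac:(lia)); lia.
Qed.

Lemma E_zero j a : E j a 0 = false.
Proof. unfold E. simpl (0 + a)%nat. destruct (TM _); reflexivity. Qed.

Lemma E_ee j b x : E (S j) (2 * b) (2 * x) = E j b x.
Proof.
  unfold E. change (2 ^ S j)%nat with (2 * 2 ^ j)%nat. pose proof (p2pos j).
  replace (2 * x + 2 * b)%nat with (2 * (x + b))%nat by lia.
  rewrite !M1, !TM_even by lia. reflexivity.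
Qed.
Lemma E_eo j b x : E (S j) (2 * b) (2 * x + 1) = negb (E j b x).
Proof.
  unfold E. change (2 ^ S j)%nat with (2 * 2 ^ j)%nat. pose proof (p2pos j).
  replace (2 * x + 1 + 2 * b)%nat with (2 * (x + b) + 1)%nat by lia.
  rewrite M2, M1, TM_odd, TM_even by lia. destruct (TM _), (TM _); reflexivity.
Qed.
Lemma E_oo j b x : E (S j) (2 * b + 1) (2 * x + 1) = negb (E j b (S x)).
Proof.
  unfold E. change (2 ^ S j)%nat with (2 * 2 ^ j)%nat. pose proof (p2pos j).
  replace (2 * x + 1 + (2 * b + 1))%nat with (2 * (S x + b))%nat by lia.
  rewrite M2, M1, TM_odd, TM_even by lia. destruct (TM _), (TM _); reflexivity.
Qed.
Lemma E_oe j b x : E (S j) (2 * b + 1) (2 * (S x)) = E j b (S x).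
Proof.
  unfold E. change (2 ^ S j)%nat with (2 * 2 ^ j)%nat. pose proof (p2pos j).
  replace (2 * S x + (2 * b + 1))%nat with (2 * (S x + b) + 1)%nat by lia.
  rewrite !M2, !TM_odd by lia. destruct (TM _), (TM _); reflexivity.
Qed.

Definition LexLe (d e : nat -> bool) : Prop :=
  (forall k, d k = e k) \/
  exists i, (forall k, (k < i)%nat -> d k = e k) /\ d i = false /\ e i = true.

Lemma dbl_lex (d e d' e' : nat -> bool) :
  (forall x, d' (2 * x)%nat = d x /\ d' (2 * x + 1)%nat = negb (d x)) ->
  (forall x, e' (2 * x)%nat = e x /\ e' (2 * x + 1)%nat = negb (e x)) ->
  LexLe d e -> LexLe d' e'.
Proof.
  intros Hd He [H|[i [H1 [H2 H3]]]].
  - left. intro k. destruct (Nat.Even_or_Odd k) as [[x ->]|[x ->]].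
    + rewrite (proj1 (Hd x)), (proj1 (He x)). auto.
    + rewrite (proj2 (Hd x)), (proj2 (He x)), H. auto.
  - right. exists (2 * i)%nat. split; [|split].
    + intros k Hk. destruct (Nat.Even_or_Odd k) as [[x ->]|[x ->]].
      * rewrite (proj1 (Hd x)), (proj1 (He x)). apply H1. lia.
      * rewrite (proj2 (Hd x)), (proj2 (He x)), H1 by lia. auto.
    + rewrite (proj1 (Hd i)). auto.
    + rewrite (proj1 (He i)). auto.
Qed.

Lemma E0_false a k : E 0 a k = false.
Proof. unfold E. simpl (2 ^ 0)%nat. rewrite !Nat.mod_1_r. reflexivity. Qed.

Lemma E_lex j a : LexLe (E j a) (E j 0).
Proof.
  revert a; induction j; intro a.
  - left. intro k. rewrite !E0_false. reflexivity.
  - destruct (Nat.Even_or_Odd a) as [[b ->]|[b ->]].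
    + apply (dbl_lex (E j b) (E j 0)); auto.
      * intro x. split; [apply E_ee | apply E_eo].
      * intro x. split; [exact (E_ee j 0 x) | exact (E_eo j 0 x)].
    + destruct j as [|j].
      * left. intro k. destruct k as [|k]; [rewrite !E_zero; reflexivity|].
        destruct (Nat.Even_or_Odd k) as [[x ->]|[x ->]].
        -- replace (S (2 * x)) with (2 * x + 1)%nat by lia.
           rewrite E_oo, !E0_false. exact (eq_sym (E_eo 0 0 x) ).
        -- replace (S (2 * x + 1)) with (2 * S x)%nat by lia.
           rewrite E_oe, E0_false. exact (eq_sym (eq_trans (E_ee 0 0 (S x)) (E0_false _ _))).
      * assert (Hs1 : E (S (S j)) 0 1 = true).
        { exact (eq_trans (E_eo (S j) 0 0) (f_equal negb (E_zero _ _))). }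
        assert (Hs2 : E (S (S j)) 0 2 = true).
        { transitivity (E (S j) 0 1); [exact (E_ee (S j) 0 1)|]. unfold E.
          change (2 ^ S j)%nat with (2 * 2 ^ j)%nat. pose proof (p2pos j).
          rewrite Nat.mod_small by lia. rewrite Nat.Div0.mod_0_l. reflexivity. }
        right. destruct (E (S j) b 1) eqn:Hb.
        -- exists 1%nat. split; [|split].
           ++ intros k Hk. assert (k = 0%nat) by lia. subst. rewrite !E_zero. auto.
           ++ exact (eq_trans (E_oo (S j) b 0) (f_equal negb Hb)).
           ++ exact Hs1.
        -- exists 2%nat. split; [|split].
           ++ intros k Hk. destruct k as [|[|k]]; [rewrite !E_zero; auto| |lia].
              rewrite Hs1. exact (eq_trans (E_oo (S j) b 0) (f_equal negb Hb)).
           ++ exact (eq_trans (E_oe (S j) b 0) Hb).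
           ++ exact Hs2.
Qed.
Open Scope R_scope.

Definition V (d : nat -> bool) : R := Series (fun n => b2R (d n) / 2 ^ S n).

Lemma is_series_g : is_series (fun n => / 2 ^ S n) 1.
Proof.
  assert (H := is_series_geom (1/2) ltac:(rewrite Rabs_pos_eq; lra)).
  apply (is_series_scal_l (1/2)) in H.
  replace 1 with (scal (1/2) (/ (1 - 1/2))) by (unfold scal; simpl; unfold mult; simpl; field).
  apply (is_series_ext _ _ _ (fun n => eq_refl) ) in H.
  eapply is_series_ext; [|exact H]. intro n. unfold scal; simpl; unfold mult; simpl.
  replace (1/2) with (/2) by field. rewrite pow_inv. simpl. field. apply pow_nonzero. lra.
Qed.

Lemma ex_g : ex_series (fun n => / 2 ^ S n).
Proof. exists 1. apply is_series_g. Qed.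
Lemma Series_g : Series (fun n => / 2 ^ S n) = 1.
Proof. apply is_series_unique, is_series_g. Qed.

Lemma pow2_gt0 n : 0 < 2 ^ n.
Proof. apply pow_lt. lra. Qed.

Lemma term_bound (b : bool) n : 0 <= b2R b / 2 ^ S n <= / 2 ^ S n.
Proof.
  pose proof (pow2_gt0 (S n)). destruct b; simpl b2R; split.
  - unfold Rdiv. rewrite Rmult_1_l. left; apply Rinv_0_lt_compat; lra.
  - unfold Rdiv. lra.
  - unfold Rdiv. lra.
  - unfold Rdiv. rewrite Rmult_0_l. left; apply Rinv_0_lt_compat; lra.
Qed.

Lemma ex_V d : ex_series (fun n => b2R (d n) / 2 ^ S n).
Proof.
  apply (@ex_series_le R_AbsRing R_CompleteNormedModule _ (fun n => / 2 ^ S n)); [|apply ex_g].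
  intro n. change (norm (b2R (d n) / 2 ^ S n)) with (Rabs (b2R (d n) / 2 ^ S n)).
  destruct (term_bound (d n) n). rewrite Rabs_pos_eq; lra.
Qed.

Lemma V_bounds d : 0 <= V d <= 1.
Proof.
  split.
  - assert (Z : Series (fun _ : nat => 0) = 0).
    { rewrite (Series_ext _ (fun n => 0 * (/ 2 ^ S n))) by (intro; ring).
      rewrite Series_scal_l. ring. }
    rewrite <- Z. unfold V. apply Series_le; [|apply ex_V].
    intro n. destruct (term_bound (d n) n). lra.
  - rewrite <- Series_g. unfold V. apply Series_le; [|apply ex_g].
    intro n. apply term_bound.
Qed.

Lemma V_ext d e : (forall n, d n = e n) -> V d = V e.
Proof. intro H. unfold V. apply Series_ext. intro n. rewrite H. reflexivity. Qed.

Lemma V_step d : V d = b2R (d 0%nat) / 2 + V (fun n => d (S n)) / 2.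
Proof.
  unfold V. rewrite Series_incr_1 by apply ex_V.
  rewrite (Series_ext (fun k => b2R (d (S k)) / 2 ^ S (S k))
             (fun k => / 2 * (b2R (d (S k)) / 2 ^ S k))).
  - rewrite Series_scal_l. simpl. field.
  - intro n. change (2 ^ S (S n)) with (2 * 2 ^ S n). field.
    pose proof (pow2_gt0 (S n)). lra.
Qed.

Lemma V_neg d : V (fun n => negb (d n)) = 1 - V d.
Proof.
  unfold V. rewrite <- Series_g, <- Series_minus by (apply ex_g || apply ex_V).
  apply Series_ext. intro n. destruct (d n); simpl; field; apply pow_nonzero; lra.
Qed.

Lemma V_lt1 d k : d k = false -> V d < 1.
Proof.
  revert d; induction k; intros d Hd; rewrite V_step.
  - rewrite Hd. pose proof (V_bounds (fun n => d (S n))). simpl. lra.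
  - pose proof (IHk (fun n => d (S n)) Hd). destruct (d 0%nat); simpl; lra.
Qed.

Lemma V_lex_aux i : forall d e, (forall k, (k < i)%nat -> d k = e k) -> d i = false -> e i = true ->
  V d <= V e.
Proof.
  induction i; intros d e H1 H2 H3; rewrite (V_step d), (V_step e).
  - rewrite H2, H3. pose proof (V_bounds (fun n => d (S n))). pose proof (V_bounds (fun n => e (S n))).
    simpl. lra.
  - rewrite (H1 0%nat) by lia.
    assert (V (fun n => d (S n)) <= V (fun n => e (S n))).
    { apply IHi; auto. intros k Hk. apply H1. lia. }
    lra.
Qed.

Lemma V_lex d e : LexLe d e -> V d <= V e.
Proof.
  intros [H|[i [H1 [H2 H3]]]].
  - right. apply V_ext. auto.
  - eapply V_lex_aux; eauto.
Qed.

Lemma V_lex_strict i : forall d e, (forall k, (k < i)%nat -> d k = e k) -> d i = false -> e i = true ->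
  (exists k, (i < k)%nat /\ d k = false) -> V d < V e.
Proof.
  induction i; intros d e H1 H2 H3 [k [Hk Hdk]]; rewrite (V_step d), (V_step e).
  - rewrite H2, H3. destruct k as [|k]; [lia|].
    pose proof (V_lt1 (fun n => d (S n)) k Hdk). pose proof (V_bounds (fun n => e (S n))).
    simpl. lra.
  - rewrite (H1 0%nat) by lia.
    assert (V (fun n => d (S n)) < V (fun n => e (S n))).
    { destruct k as [|k]; [lia|]. apply IHi; auto. intros k' Hk'. apply H1. lia.
      exists k. split; auto. lia. }
    lra.
Qed.

Lemma tpar_ext s s' : (forall k, s k = s' k) -> forall k, tpar s k = tpar s' k.
Proof. intros H k. induction k; simpl; auto. rewrite IHk, H. auto. Qed.

Lemma tau_ext s s' : (forall k, s k = s' k) -> tau_of s = tau_of s'.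
Proof. intro H. apply (V_ext (fun n => tpar s (S n)) (fun n => tpar s' (S n))). intro. apply tpar_ext; auto. Qed.

Lemma tpar_S s k : tpar s (S k) = xorb (s 0%nat) (tpar (fun k => s (S k)) k).
Proof.
  induction k.
  - simpl. destruct (s 0%nat); auto.
  - change (tpar s (S (S k))) with (xorb (tpar s (S k)) (s (S k))). rewrite IHk.
    simpl. destruct (s 0%nat), (tpar _ k), (s (S k)); auto.
Qed.

Lemma tent_tau s : tent (tau_of s) = tau_of (fun k => s (S k)).
Proof.
  change (tau_of s) with (V (fun n => tpar s (S n))).
  change (tau_of (fun k => s (S k))) with (V (fun n => tpar (fun k => s (S k)) (S n))).
  set (d' := fun n => tpar (fun k => s (S k)) (S n)).
  rewrite V_step. pose proof (V_bounds d').
  assert (E0 : tpar s 1 = s 0%nat) by (simpl; destruct (s 0%nat); auto).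
  rewrite E0.
  destruct (s 0%nat) eqn:Hs.
  - rewrite (V_ext _ (fun n => negb (d' n))).
    + rewrite V_neg. unfold tent. simpl b2R. destruct (Rlt_dec _ _); lra.
    + intro n. rewrite tpar_S, Hs. reflexivity.
  - rewrite (V_ext _ d').
    + unfold tent. simpl b2R. destruct (Rlt_dec _ _); lra.
    + intro n. rewrite tpar_S, Hs. reflexivity.
Qed.

Lemma iter_tent m : forall s, Nat.iter m tent (tau_of s) = tau_of (fun k => s (k + m)%nat).
Proof.
  induction m; intro s.
  - simpl. apply tau_ext. intro. rewrite Nat.add_0_r. auto.
  - change (Nat.iter (S m) tent (tau_of s)) with (tent (Nat.iter m tent (tau_of s))).
    rewrite IHm, tent_tau. apply tau_ext. intro k. f_equal. lia.
Qed.

Lemma tpar_shift s m k : tpar (fun k => s (k + m)%nat) k = xorb (tpar s (k + m)) (tpar s m).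
Proof.
  induction k.
  - simpl. destruct (tpar s m); auto.
  - simpl. rewrite IHk. destruct (tpar s (k + m)), (tpar s m), (s (k + m)%nat); auto.
Qed.

Lemma lex_shift d e : d 0%nat = false -> e 0%nat = false -> LexLe d e ->
  LexLe (fun n => d (S n)) (fun n => e (S n)).
Proof.
  intros H0 H0' [H|[i [H1 [H2 H3]]]].
  - left. auto.
  - right. destruct i as [|i]; [congruence|]. exists i. split; [|split]; auto.
    intros k Hk. apply H1. lia.
Qed.

Theorem mainTheorem7 :
  (forall j : nat, (1 <= j)%nat -> inLambda (tau_j j)) /\
  (forall j : nat, (1 <= j)%nat -> tau_j j < tau_j (S j)).
Proof.
  assert (Htau : forall n, tau_j (S n) = V (fun i => E (S n) 0 (S i))).
  { intro n. unfold tau_j. change (tau_of (K (S n))) with (V (fun i => tpar (K (S n)) (S i))).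
    apply V_ext. intro i. rewrite KT. unfold E. rewrite Nat.add_0_r, Nat.Div0.mod_0_l, TM0.
    destruct (TM _); auto. }
  split.
  - intros j Hj. destruct j as [|n]; [lia|]. split.
    + apply V_bounds.
    + intro m. unfold tau_j at 1. rewrite iter_tent, Htau.
      change (tau_of (fun k => K (S n) (k + m)%nat)) with
        (V (fun i => tpar (fun k => K (S n) (k + m)%nat) (S i))).
      rewrite (V_ext _ (fun i => E (S n) m (S i))).
      * apply V_lex, lex_shift; try apply E_zero. apply E_lex.
      * intro i. rewrite tpar_shift, !KT. reflexivity.
  - intros j Hj. destruct j as [|n]; [lia|]. rewrite !Htau.
    set (P := (2 ^ S n)%nat).
    assert (HP : (2 <= P)%nat) by (unfold P; simpl; pose proof (p2pos n); lia).
    assert (HE : forall j i, E j 0 i = TM (i mod 2 ^ j)).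
    { intros. unfold E. rewrite Nat.add_0_r, Nat.Div0.mod_0_l, TM0. destruct (TM _); auto. }
    apply (V_lex_strict (P - 1)).
    + intros k Hk. rewrite !HE. fold P. change (2 ^ S (S n))%nat with (2 * P)%nat.
      rewrite !Nat.mod_small by lia. auto.
    + rewrite HE. fold P. replace (S (P - 1)) with P by lia. rewrite Nat.Div0.mod_same. apply TM0.
    + rewrite HE. change (2 ^ S (S n))%nat with (2 * P)%nat. replace (S (P - 1)) with P by lia.
      rewrite Nat.mod_small by lia. apply TM_pow.
    + exists (2 * P - 1)%nat. split; [lia|]. rewrite HE. fold P.
      replace (S (2 * P - 1)) with (2 * P)%nat by lia. rewrite Nat.Div0.mod_mul. apply TM0.
Qed.
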